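(* Let $T$ be an equidistant tree with $n$ leaves and ultrametric $u$, and let $t_1<t_2<\dots<t_k$ ($k\le n-1$) be its speciation times. For $i=1,\dots,k$ let $T^i$ be the equidistant tree whose ultrametric $w^i$ is given by $w^i_{pq}=\max\{2t_i,\,u_{pq}\}$ for all leaves $p<q$ (so $T^1=T$ and $T^k$ is the star tree). Then the tropical line segment in $\mathcal{U}_n$ from $u$ to the origin (the ultrametric of the star tree with $n$ leaves) is the union of the ordinary line segments between the ultrametrics $w^i$ and $w^{i+1}$ of $T^i$ and $T^{i+1}$, for $i=1,\dots,k-1$.
   Context: Max-plus arithmetic: $a\oplus b=\max\{a,b\}$, $a\odot b=a+b$; $e=\binom n2$; points of $\mathbb{R}^e$ (coordinates indexed by pairs $p<q$ of leaves in $\{1,\dots,n\}$) are considered modulo $\mathbb{R}\mathbf 1$, so the origin is the class of constant vectors. An equidistant tree is a rooted phylogenetic tree with nonnegative edge lengths and all root-to-leaf distances equal; its ultrametric $u$ is the vector of pairwise leaf distances $u_{pq}$ (for all distinct $p,q,r$ the maximum of $u_{pq},u_{pr},u_{qr}$ is attained at least twice); $\mathcal U_n$ is the set of ultrametrics in $\mathbb{R}^e/\mathbb{R}\mathbf 1$. The star tree has all leaves attached to the root; its ultrametric is constant. The speciation times of $T$ are the distinct values of $u_{pq}/2$, listed in increasing order $t_1<\dots<t_k$ (the heights above the leaves of the internal nodes). The tropical line segment between $x$ and $y$ is $\{a\odot x\oplus b\odot y:a,b\in\mathbb{R}\}$. *)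

(* Defs.v *)
(* Vectors in R^e, e = binom(n,2), are represented as
   functions x : 'I_n -> 'I_n -> R of which only the coordinates x p q
   with p < q are used. *)
From HB Require Import structures.
From mathcomp Require Import all_boot all_order all_algebra.
From mathcomp Require Import reals.
Set Implicit Arguments. Unset Strict Implicit. Unset Printing Implicit Defensive.
Import Order.TTheory GRing.Theory Num.Theory.
Local Open Scope ring_scope.

Section Defs.
Variables (R : realType) (n : nat).

Definition vec := 'I_n -> 'I_n -> R.

Definition upair (u : vec) (p q : 'I_n) : R :=
  if (p < q)%N then u p q else u q p.

Definition is_ultrametric (u : vec) : Prop :=
  (forall p q : 'I_n, (p < q)%N -> 0 <= u p q) /\
  (forall p q r : 'I_n, p != q -> p != r -> q != r ->
     let a := upair u p q in let b := upair u p r in let c := upair u q r in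
     let m := Num.max a (Num.max b c) in
     (2 <= (a == m) + (b == m) + (c == m))%N).

Definition speciation_times (u : vec) : seq R :=
  sort <=%R (undup [seq u pq.1 pq.2 / 2 | pq : 'I_n * 'I_n <- enum {: 'I_n * 'I_n} &
                                         (pq.1 < pq.2)%N]).

(* w^i_pq = max (2 t_i) u_pq  (0-based index i) *)
Definition wtree (u : vec) (i : nat) : vec :=
  fun p q => Num.max (2 * nth 0 (speciation_times u) i) (u p q).

(* equality in R^e / R 1 *)
Definition eq_mod1 (x y : vec) : Prop :=
  exists c : R, forall p q : 'I_n, (p < q)%N -> x p q = y p q + c.

Definition in_trop_segment (x y z : vec) : Prop :=
  exists a b : R, eq_mod1 z (fun p q => Num.max (a + x p q) (b + y p q)).

Definition in_segment (x y z : vec) : Prop :=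
  exists lam : R, 0 <= lam <= 1 /\
    eq_mod1 z (fun p q => lam * x p q + (1 - lam) * y p q).

Definition origin : vec := fun _ _ => 0.
End Defs.

(* Main.v *)
Require Import Defs.
From HB Require Import structures.
From mathcomp Require Import all_boot all_order all_algebra.
From mathcomp Require Import reals.
From mathcomp Require Import ring lra.
Import Order.TTheory GRing.Theory Num.Theory.
Local Open Scope ring_scope.
Set Implicit Arguments. Unset Strict Implicit.

Ltac splitmax := repeat match goal with
  | |- context[Num.max ?x ?y] => case: (leP x y) => ?
  | |- context[Num.min ?x ?y] => case: (leP x y) => ?
  | H : context[Num.max ?x ?y] |- _ => move: H; case: (leP x y) => ? H
  | H : context[Num.min ?x ?y] |- _ => move: H; case: (leP x y) => ? H
  end.

Lemma key1 (R : realType) (U d s0 sk : R) : 2*s0 <= U <= 2*sk -> s0 <= sk ->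
  Num.max U d = Num.max U (Num.min (Num.max d (2*s0)) (2*sk)) + (Num.max d (2*sk) - 2*sk).
Proof. move=> /andP[h1 h2] h3; splitmax; lra. Qed.

Lemma key2 (R : realType) (U lam si sj : R) : (U <= 2*si \/ 2*sj <= U) -> si <= sj ->
  0 <= lam <= 1 ->
  lam * Num.max (2*si) U + (1-lam) * Num.max (2*sj) U =
  Num.max (0 + U) (2*(lam*si + (1-lam)*sj) + 0).
Proof. move=> h1 h2 /andP[h3 h4]; case: h1=> h1; splitmax; nra. Qed.

Section S.
Variables (R : realType) (n : nat) (u : vec R n).
Local Notation s := (speciation_times u).

Lemma s_sorted : sorted <=%R s.
Proof. apply: sort_sorted; exact: le_total. Qed.

Lemma s_uniq : uniq s.
Proof. by rewrite sort_uniq undup_uniq. Qed.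

Lemma mem_s (p q : 'I_n) : (p < q)%N -> u p q / 2 \in s.
Proof.
move=> pq; rewrite mem_sort mem_undup; apply/mapP; exists (p, q) => //.
by rewrite mem_filter /= pq mem_enum.
Qed.

Lemma s_le i j : (i <= j)%N -> (j < size s)%N -> s`_i <= s`_j.
Proof.
move=> ij js; apply: (sorted_leq_nth le_trans lexx 0 s_sorted) => //.
  by rewrite inE (leq_ltn_trans ij js).
Qed.

Lemma s_lt i : (i.+1 < size s)%N -> s`_i < s`_i.+1.
Proof.
move=> h; rewrite lt_neqAle s_le // andbT nth_uniq ?s_uniq //; last exact: ltnW.
by rewrite neq_ltn ltnSn.
Qed.

Lemma s_between x i : x \in s -> (i.+1 < size s)%N -> x <= s`_i \/ s`_i.+1 <= x.
Proof.
move=> xs h; rewrite -(nth_index 0 xs); have js : (index x s < size s)%N by rewrite index_mem.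
case: (leqP (index x s) i) => ji.
  by left; apply: s_le => //; apply: ltnW.
by right; apply: s_le.
Qed.

Lemma s_range x : x \in s -> s`_0 <= x <= s`_(size s).-1.
Proof.
move=> xs; rewrite -(nth_index 0 xs); have js : (index x s < size s)%N by rewrite index_mem.
rewrite s_le // s_le //; last by rewrite prednK // (leq_ltn_trans _ js).
by rewrite -ltnS prednK // (leq_ltn_trans _ js).
Qed.

Lemma find_int (f : nat -> R) d K : (0 < K)%N -> f 0%N <= d <= f K ->
  exists2 i, (i < K)%N & f i <= d <= f i.+1.
Proof.
elim: K => [//|[|K] IH] _ /andP[h1 h2]; first by exists 0%N => //; rewrite h1.
case: (leP d (f K.+1)) => h.
  by have [i iK hi] := IH erefl (introT andP (conj h1 h)); exists i => //; apply: ltnW.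
by exists K.+1 => //; rewrite (ltW h).
Qed.
End S.

Theorem theorem4 (R : realType) (n : nat) (u : vec R n) :
  is_ultrametric u ->
  (1 < size (speciation_times u))%N ->
  forall z : vec R n,
    in_trop_segment u (@origin R n) z <->
    exists2 i : nat, (i.+1 < size (speciation_times u))%N &
      in_segment (wtree u i) (wtree u i.+1) z.
Proof.
move=> _ hk z; split.
  move=> [a [b [c Hz]]].
  set s := speciation_times u.
  set s0 := s`_0; set sk := s`_(size s).-1.
  set d := b - a.
  set d' := Num.min (Num.max d (2*s0)) (2*sk).
  have s0k : s0 <= sk by apply: s_le => //; rewrite prednK // ltnW.
  have hK : (0 < (size s).-1)%N by rewrite -ltnS prednK // ltnW.
  have hd : 2 * s0 <= d' <= 2 * sk by rewrite /d'; splitmax; apply/andP; split; lra.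
  have [i iK /andP[hi1 hi2]] := @find_int R (fun j => 2 * s`_j) d' _ hK hd.
  have ik : (i.+1 < size s)%N by rewrite -(prednK (ltnW hk)) ltnS.
  have slt := s_lt ik.
  exists i => //.
  pose lam := (2 * s`_i.+1 - d') / (2 * s`_i.+1 - 2 * s`_i).
  have hden : 0 < 2 * s`_i.+1 - 2 * s`_i by lra.
  have hlam : 2 * (lam * s`_i + (1 - lam) * s`_i.+1) = d'.
    rewrite /lam; field; lra.
  have hl : 0 <= lam <= 1.
    apply/andP; split; first by apply: divr_ge0; lra.
    by rewrite ler_pdivrMr //; lra.
  exists lam; split => //.
  exists (a + c + (Num.max d (2*sk) - 2*sk)) => p q pq.
  rewrite Hz // /wtree /origin.
  have hU := mem_s u pq.
  have /andP[r1 r2] : s0 <= u p q / 2 <= sk := s_range hU.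
  rewrite key2; last first.
  - exact: hl.
  - exact: ltW.
  - by case: (s_between hU ik) => h; [left|right]; lra.
  rewrite hlam.
  have -> : Num.max (a + u p q) (b + 0) = a + Num.max (u p q) d.
    by rewrite /d; splitmax; lra.
  rewrite (@key1 _ (u p q) d s0 sk) //; last by apply/andP; split; lra.
  rewrite -/d' add0r addr0; lra.
move=> [i ik [lam [hl [c Hz]]]].
exists 0, (2*(lam * (speciation_times u)`_i + (1-lam) * (speciation_times u)`_i.+1)).
exists c => p q pq.
rewrite Hz // /wtree /origin key2 //.
- by case: (s_between (mem_s u pq) ik) => h; [left|right]; lra.
- exact: ltW (s_lt ik).
Qed.
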